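(* Let $G$ be a median graph in $\mathcal{U}_3$ with $n\ge 3$ vertices and $v_0$ its unique vertex lying in every majority halfspace. Let $u,v$ be vertices different from $v_0$ with $L_{v_0,u}\ne L_{v_0,v}$ and $L_{v_0,u}\cap L_{v_0,v}\neq\emptyset$, and let $m=m(u,v,v_0)$ be the median of $u,v,v_0$ (the unique vertex of $I(u,v)\cap I(v,v_0)\cap I(v_0,u)$). Then $m\ne v_0$ and $L_{v_0,m}=L_{v_0,u}\cap L_{v_0,v}$.
   Context: Graphs are finite, simple, connected, undirected; $d$ is shortest-path distance; $I(u,v)=\{x:d(u,x)+d(x,v)=d(u,v)\}$; a graph is median if every triple $x,y,z$ has $|I(x,y)\cap I(y,z)\cap I(z,x)|=1$. $\Theta$-classes: classes of the reflexive–transitive closure of the relation on edges ''opposite edges of a 4-cycle''; deleting a $\Theta$-class $E_i$ of a median graph leaves two components with vertex sets (halfspaces) $H_i',H_i''$. $\mathcal{U}_3$ is the family of median graphs with $n$ vertices in which every $\Theta$-class satisfies $\min\{|H_i'|,|H_i''|\}<n/3$; the larger halfspace is the majority halfspace. For $u\ne v$, the ladder set $L_{u,v}$ is the set of $\Theta$-classes $E_i$ such that $u,v$ lie in different halfspaces of $E_i$ and $u$ is an endpoint of an edge of $E_i$. *)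

(* Defs.v *)
From mathcomp Require Import all_boot.
Set Implicit Arguments. Unset Strict Implicit. Unset Printing Implicit Defensive.

Section Graphs.
Variables (T : finType) (e : rel T).

Definition simple_connected_graph : Prop :=
  symmetric e /\ irreflexive e /\ (forall x y : T, connect e x y).

Definition walkb (x y : T) (k : nat) : bool :=
  [exists p : k.-tuple T, path e x p && (last x p == y)].

(* shortest-path distance: the least k (< #|T|) such that a walk of length k
   from x to y exists; in a connected graph this is d(x,y). *)
Definition dist (x y : T) : nat := find (walkb x y) (iota 0 #|T|).

Definition interval (u v : T) : {set T} :=
  [set x | dist u x + dist x v == dist u v].

Definition median_graph : Prop :=
  forall x y z : T,
    #|interval x y :&: interval y z :&: interval z x| = 1.

(* edges as ordered pairs; an unordered edge {a,b} is represented by both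
   (a,b) and (b,a). *)
Definition is_edge (p : T * T) : bool := e p.1 p.2.

(* one step of the relation generating Theta: either the same edge with the
   other orientation, or (a,b),(c,d) opposite edges of the 4-cycle a-b-d-c-a *)
Definition theta_step (p q : T * T) : bool :=
  is_edge p && is_edge q &&
  ((q == (p.2, p.1)) ||
   [&& e p.1 q.1, e p.2 q.2, p.1 != q.2 & p.2 != q.1]).

Definition theta_class (a b : T) : {set T * T} :=
  [set q | is_edge q && connect theta_step (a, b) q].

Definition is_theta_class (E : {set T * T}) : bool :=
  [exists a : T, exists b : T, e a b && (E == theta_class a b)].

Definition del_rel (E : {set T * T}) : rel T :=
  fun x y => e x y && ((x, y) \notin E).

(* the component of x in G - E (a halfspace when x is an endpoint of an
   edge of E) *)
Definition halfspace (E : {set T * T}) (x : T) : {set T} :=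
  [set y | connect (del_rel E) x y].

Definition in_U3 : Prop :=
  forall a b : T, e a b ->
    3 * minn #|halfspace (theta_class a b) a|
             #|halfspace (theta_class a b) b| < #|T|.

Definition in_all_majority_halfspaces (v0 : T) : Prop :=
  forall a b : T, e a b ->
    #|halfspace (theta_class a b) b| < #|halfspace (theta_class a b) a| ->
    v0 \in halfspace (theta_class a b) a.

Definition ladder (u v : T) : {set {set T * T}} :=
  [set E | [&& is_theta_class E,
              ~~ connect (del_rel E) u v &
              [exists w : T, (u, w) \in E]]].

End Graphs.

(* Main.v *)
Require Import Defs.
From mathcomp Require Import all_boot zify.
Set Implicit Arguments. Unset Strict Implicit. Unset Printing Implicit Defensive.

Ltac slia :=
  repeat match goal with
  | H : is_true (_ <= _) |- _ => revert H
  | H : @eq nat _ _ |- _ => revert H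
  | H : ~ (@eq nat _ _) |- _ => revert H
  end; clear; intros; lia.

Section G.
Variables (T : finType) (e : rel T).
Hypothesis esym : symmetric e.
Hypothesis eirr : irreflexive e.
Hypothesis econ : forall x y, connect e x y.
Hypothesis hmed : median_graph e.
Local Notation d := (dist e).

Lemma walkb0 x y : walkb e x y 0 = (x == y).
Proof.
apply/existsP/eqP => [[p /andP[_ /eqP]]|->].
  by rewrite tuple0.
by exists [tuple]; rewrite /= eqxx.
Qed.

Lemma walkbS x y k : walkb e x y k.+1 = [exists z, e x z && walkb e z y k].
Proof.
apply/existsP/existsP => [[p]|[z /andP[exz /existsP[q hq]]]].
  case: p / tupleP => z q /= /andP[/andP[exz pq] hl].
  by exists z; rewrite exz; apply/existsP; exists q; rewrite pq.
by exists [tuple of z :: q]; rewrite /= exz.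
Qed.

Lemma walk_cat x y z i j : walkb e x y i -> walkb e y z j -> walkb e x z (i + j).
Proof.
elim: i x => [|i IH] x.
  by rewrite walkb0 => /eqP ->.
rewrite walkbS addSn walkbS => /existsP[w /andP[exw hw]] hj.
by apply/existsP; exists w; rewrite exw (IH _ hw hj).
Qed.

Lemma walk_sym x y k : walkb e x y k -> walkb e y x k.
Proof.
elim: k x y => [|k IH] x y.
  by rewrite !walkb0 eq_sym.
rewrite walkbS => /existsP[z /andP[exz hz]].
rewrite -addn1; apply: walk_cat (IH _ _ hz) _.
rewrite walkbS; apply/existsP; exists x; rewrite walkb0 eqxx andbT esym; exact: exz.
Qed.

Lemma walk_ex x y : exists2 k, k < #|T| & walkb e x y k.
Proof.
have /connectP[p pth ->] := econ x y.
case: (shortenP pth) => p' pth' up _.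
exists (size p').
  have h2 := card_uniqP up; have h1 := max_card (mem (x :: p')).
  by rewrite h2 /= in h1.
by apply/existsP; exists (in_tuple p'); rewrite /= pth' eqxx.
Qed.

Lemma d_walk x y : walkb e x y (d x y).
Proof.
have [k hk hw] := walk_ex x y.
have hs : has (walkb e x y) (iota 0 #|T|).
  by apply/hasP; exists k => //; rewrite mem_iota.
have := nth_find 0 hs; rewrite has_find size_iota in hs.
by rewrite nth_iota.
Qed.

Lemma d_lt x y : d x y < #|T|.
Proof.
have [k hk hw] := walk_ex x y.
have hs : has (walkb e x y) (iota 0 #|T|).
  by apply/hasP; exists k => //; rewrite mem_iota.
by rewrite has_find size_iota in hs.
Qed.

Lemma d_min x y j : walkb e x y j -> d x y <= j.
Proof.
move=> hj; case: (leqP #|T| j) => hT.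
  by have := d_lt x y; lia.
rewrite leqNgt; apply/negP => hlt.
by have := before_find 0 hlt; rewrite nth_iota // add0n hj.
Qed.

Lemma d_xx x : d x x = 0.
Proof. by apply/eqP; rewrite -leqn0 d_min // walkb0. Qed.

Lemma d_eq0 x y : d x y = 0 -> x = y.
Proof. by move=> h; have := d_walk x y; rewrite h walkb0 => /eqP. Qed.

Lemma d_sym x y : d x y = d y x.
Proof. by apply/eqP; rewrite eqn_leq !d_min // walk_sym // d_walk. Qed.

Lemma d_tri x y z : d x z <= d x y + d y z.
Proof. by apply: d_min; apply: walk_cat; apply: d_walk. Qed.

Lemma d_edge x y : e x y -> d x y = 1.
Proof.
move=> exy; apply/eqP; rewrite eqn_leq; apply/andP; split.
  apply: d_min; rewrite walkbS; apply/existsP; exists y.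
  rewrite walkb0 eqxx andbT; exact: exy.
rewrite lt0n; apply/eqP => /d_eq0 h; move: exy; by rewrite h eirr.
Qed.

Lemma d1_edge x y : d x y = 1 -> e x y.
Proof.
move=> h; have := d_walk x y; rewrite h walkbS => /existsP[z /andP[exz]].
by rewrite walkb0 => /eqP <-.
Qed.

Lemma d_step x y k : d x y = k.+1 -> exists2 z, e x z & d z y = k.
Proof.
move=> h; have := d_walk x y; rewrite h walkbS => /existsP[z /andP[exz hz]].
exists z => //; apply/eqP; rewrite eqn_leq d_min //=.
have := d_tri x z y; rewrite (d_edge exz) h; lia.
Qed.

Lemma med_ex x y z : exists m,
  [/\ d x m + d m y = d x y, d y m + d m z = d y z & d z m + d m x = d z x].
Proof.
move: (hmed x y z) => /eqP /cards1P [m hm].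
have : m \in [set m] by rewrite inE.
rewrite -hm !inE => /andP[/andP[/eqP h1 /eqP h2] /eqP h3].
by exists m.
Qed.

Lemma med_uniq x y z m1 m2 :
  d x m1 + d m1 y = d x y -> d y m1 + d m1 z = d y z -> d z m1 + d m1 x = d z x ->
  d x m2 + d m2 y = d x y -> d y m2 + d m2 z = d y z -> d z m2 + d m2 x = d z x ->
  m1 = m2.
Proof.
move=> a1 a2 a3 b1 b2 b3.
move: (hmed x y z) => /eqP /cards1P [m hm].
have h1 : m1 \in [set m] by rewrite -hm !inE a1 a2 a3 !eqxx.
have h2 : m2 \in [set m] by rewrite -hm !inE b1 b2 b3 !eqxx.
by move: h1 h2; rewrite !inE => /eqP -> /eqP ->.
Qed.

Lemma bip x y z : e x y -> d x z <> d y z.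
Proof.
move=> exy.
have [m [h1 h2 h3]] := med_ex x y z.
have dxy := d_edge exy.
have := d_sym x m; have := d_sym y m; have := d_sym z m; have := d_sym x z; have := d_sym y z; have := d_sym x y.
case hxm: (d x m) => [|n].
  move/d_eq0: hxm => ex; subst m; rewrite !d_xx in h1 h2 h3 *; lia.
have hmy : d m y = 0 by lia.
move/d_eq0: hmy => ex; subst m; rewrite !d_xx in h1 h2 h3 *; lia.
Qed.

Lemma adj x y z : e x y -> d x z = d y z + 1 \/ d y z = d x z + 1.
Proof.
move=> exy; have := @bip x y z exy; have := d_tri x y z; have := d_tri y x z.
have eyx : e y x by rewrite esym.
rewrite (d_edge exy) (d_edge eyx); lia.
Qed.


Definition W (a b x : T) : bool := d x a < d x b.

Lemma side_neg a b x : e a b -> ~~ W a b x = W b a x.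
Proof.
move=> eab; have := @bip a b x eab; rewrite /W (d_sym a x) (d_sym b x).
case: ltngtP => //; slia.
Qed.

Lemma W_dist a b x : e a b -> W a b x -> d x b = d x a + 1.
Proof.
move=> eab; rewrite /W => h; have := d_tri x a b; rewrite (d_edge eab); slia.
Qed.

Lemma L1 a b x y : W a b x -> d x y + d y a = d x a -> W a b y.
Proof. rewrite /W => h1 h2; have := d_tri x y b; slia. Qed.

Lemma K23 p q c1 c2 c3 : p != q -> c1 != c2 -> c1 != c3 -> c2 != c3 ->
  e p c1 -> e p c2 -> e p c3 -> e q c1 -> e q c2 -> e q c3 -> False.
Proof.
move=> npq n12 n13 n23 p1 p2 p3 q1 q2 q3.
have d2 : forall c c', c != c' -> e p c -> e p c' -> d c c' = 2.
  move=> c c' ncc pc pc'.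
  have ecp : e c p by rewrite esym.
  have := d_tri c p c'; rewrite (d_edge ecp) (d_edge pc') => hle.
  have h0 : d c c' <> 0 by move/d_eq0 => h; move: ncc; rewrite h eqxx.
  have h1 : d c c' <> 1.
    move/d1_edge => ecc; have := @bip c c' p ecc.
    rewrite (d_sym c p) (d_sym c' p) (d_edge pc) (d_edge pc'); done.
  slia.
have d2' := d2 _ _ n23 p2 p3.
have d2'' := d2 _ _ n13 p1 p3.
have := d2 _ _ n12 p1 p2 => d12.
have ds : forall c c', e c c' -> d c c' = 1 /\ d c' c = 1.
  by move=> c c' h; rewrite d_edge // d_sym d_edge.
have [a1 a1'] := ds _ _ p1; have [a2 a2'] := ds _ _ p2; have [a3 a3'] := ds _ _ p3.
have [b1 b1'] := ds _ _ q1; have [b2 b2'] := ds _ _ q2; have [b3 b3'] := ds _ _ q3.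
have := @med_uniq c1 c2 c3 p q.
rewrite a1 a1' a2 a2' a3 a3' b1 b1' b2 b2' b3 b3' d12 d2' (d_sym c3 c1) d2''.
move=> h; have epq : p = q by apply: h.
by move: npq; rewrite epq eqxx.
Qed.

Lemma conv_core a b (eab : e a b) x y z
  (IH : forall x' y' z', d x' a < d x a -> W a b x' -> W a b y' ->
         d x' z' + d z' y' = d x' y' -> W a b z') :
  W a b x -> W a b y -> d x z + d z y = d x y -> W a b z.
Proof.
have eba : e b a by rewrite esym.
move=> Wx Wy Iz; apply/negPn/negP; rewrite (side_neg _ eab) => Wz.
have nW : forall w, W a b w -> W b a w -> False.
  by move=> w; rewrite /W; slia.
have [p [p1 p2 p3]] := med_ex x z a.
have Wp : W a b p.
  apply: L1 Wx _; have := d_sym a p; have := d_sym a x; have := d_sym x p; slia.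
case: (eqVneq p x) => [epx | npx]; last first.
  apply: (nW z) Wz; apply: (IH p y z) => //.
    have : d x p <> 0 by move/d_eq0 => h; move: npx; rewrite h eqxx.
    have := d_sym a p; have := d_sym a x; have := d_sym x p; slia.
  have := d_tri p z y; have := d_tri x p y; slia.
subst p; rewrite d_xx in p1 p3.
have dxb := W_dist eab Wx.
have dzb := W_dist eba Wz.
have [t [t1 t2 t3]] := med_ex x b z.
have := d_sym b t; have := d_sym b z; have := d_sym z t; have := d_sym t x;
  have := d_sym z x => s1 s2 s3 s4 s5.
have dxt : d x t = 1 by slia.
have dtb : d t b = d x a by slia.
have dtz : d t z + 1 = d x z by slia.
have Wt : W b a t.
  by apply: L1 Wz _; slia.
have ext : e x t by apply: d1_edge.
have dty : d x y = d t y + 1.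
  have := d_tri t z y; have := d_tri x t y; slia.
have dta := W_dist eba Wt.
case hk: (d x a) => [|k].
  rewrite hk in dtb; move/d_eq0: hk => hxa; subst x.
  move/d_eq0: dtb => htb; subst t.
  move: Wy; rewrite /W (d_sym y a) (d_sym y b); slia.
have [x' exx' dx'a] := d_step hk.
have Wx' : W a b x'.
  by apply: L1 Wx _; rewrite (d_edge exx'); slia.
have dx'b := W_dist eab Wx'.
have dx't : d x' t = 2.
  have := d_tri x' x t; have := d_tri t x' a; have := d_sym x x';
  have := d_sym t x'; rewrite (d_edge exx'); slia.
have [t' [u1 u2 u3]] := med_ex x' t b.
have := d_sym b t'; have := d_sym b x'; have := d_sym t' t; have := d_sym t' x' => r1 r2 r3 r4.
have dx't' : d x' t' = 1 by slia.
have dtt' : d t t' = 1 by slia.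
have Wt' : W b a t'.
  by apply: L1 Wt _; slia.
have ett' : e t t' by apply: d1_edge.
have ex't' : e x' t' by apply: d1_edge.
have [c1|c2] := adj y ett'.
  apply: (nW t') Wt'; apply: (IH x' y t'); rewrite ?hk ?dx'a //.
  have := d_tri x' t' y; have := d_tri x x' y; rewrite (d_edge exx'); slia.
have [c3|c4] := adj y exx'; last first.
  apply: (nW t) Wt; apply: (IH x' y t); rewrite ?hk ?dx'a //; slia.
have [m [v1 v2 v3]] := med_ex x' t y.
have := d_sym y m; have := d_sym y x'; have := d_sym m t; have := d_sym m x' => w0 w1 w2 w3.
have dx'm : d x' m = 1 by slia.
have dtm : d t m = 1 by slia.
have dmy : d m y + 1 = d t y by slia.
apply: (@K23 x' t x t' m).
- by apply/eqP => h; move: dx't; rewrite h d_xx.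
- by apply/eqP => h; subst t'; apply: (nW x).
- by apply/eqP => h; subst m; slia.
- by apply/eqP => h; subst m; slia.
- by rewrite esym.
- by [].
- by apply: d1_edge.
- by rewrite esym.
- by [].
- by apply: d1_edge.
Qed.


Lemma conv a b (eab : e a b) x y z :
  W a b x -> W a b y -> d x z + d z y = d x y -> W a b z.
Proof.
suff H : forall n x y z, d x a <= n -> W a b x -> W a b y ->
    d x z + d z y = d x y -> W a b z by apply: H.
elim=> [|n IHn] {}x {}y {}z hn; apply: conv_core => // x' y' z' hlt.
  by move: hn hlt; slia.
by apply: IHn; move: hn hlt; slia.
Qed.

Lemma convS a b (eab : e a b) s u w v :
  W a b u = s -> W a b w = s -> d u v + d v w = d u w -> W a b v = s.
Proof.
have eba : e b a by rewrite esym.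
case: s => hu hw hv; first exact: conv hu hw hv.
apply/negP => hv'.
have : ~~ W b a v by rewrite -(side_neg _ eab) hv'.
by rewrite (conv eba _ _ hv) // -(side_neg _ eab) ?hu ?hw.
Qed.

Definition cross a b (p : T * T) := W a b p.1 != W a b p.2.

Lemma cross_step a b (eab : e a b) p q :
  theta_step e p q -> cross a b p -> cross a b q.
Proof.
case: p => c dd; case: q => f g.
rewrite /theta_step /is_edge /cross /=.
move=> /andP[/andP[ep eq] /orP[/eqP [-> ->] | /and4P[h1 h2 h3 h4]]].
  by rewrite eq_sym.
have tri : forall x y z, e x y -> e y z -> e x z -> False.
  move=> x y z exy eyz exz; have := @bip x y z exy.
  by rewrite (d_edge exz) (d_edge eyz).
have dcg : d c dd + d dd g = d c g.
  rewrite (d_edge ep) (d_edge h2).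
  have := d_tri c dd g; rewrite (d_edge ep) (d_edge h2) => hle.
  have h0 : d c g <> 0 by move/d_eq0 => h; move: h3; rewrite h eqxx.
  have h1' : d c g <> 1 by move/d1_edge => ecg; apply: (tri c dd g).
  by move: hle h0 h1'; clear; lia.
have edc : e dd c by rewrite esym.
have ddf : d dd c + d c f = d dd f.
  rewrite (d_edge edc) (d_edge h1).
  have := d_tri dd c f; rewrite (d_edge edc) (d_edge h1) => hle.
  have h0 : d dd f <> 0 by move/d_eq0 => h; move: h4; rewrite h eqxx.
  have h1' : d dd f <> 1.
    move/d1_edge => edf; apply: (tri c dd f) => //.
  by move: hle h0 h1'; clear; lia.
move=> hc; apply/negP => /eqP hfg.
case hcs: (W a b c == W a b f).
  have := convS eab (eqP hcs) (sym_equal hfg) dcg.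
  by move=> h; move: hc; rewrite h (eqP hcs) eqxx.
have hds : W a b dd = W a b f.
  by move: hc hcs; case: (W a b c); case: (W a b dd); case: (W a b f).
have := convS eab hds (erefl _) ddf.
by move=> h; move: hcs; rewrite h eqxx.
Qed.

Lemma class_cross a b (eab : e a b) q :
  q \in theta_class e a b -> cross a b q.
Proof.
rewrite inE => /andP[_ /connectP[s pth ->]].
have : cross a b (a, b).
  by rewrite /cross /W /= !d_xx (d_sym b a) (d_edge eab).
elim: s (a, b) pth => [|q' s IH] p0 //= /andP[hst hp] hc.
by apply: IH hp _; apply: cross_step hst hc.
Qed.

Lemma cross_class a b (eab : e a b) x y :
  e x y -> W a b x -> ~~ W a b y -> connect (theta_step e) (a, b) (x, y).
Proof.
have eba : e b a by rewrite esym.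
suff H : forall n x y, d x a = n -> e x y -> W a b x -> ~~ W a b y ->
   connect (theta_step e) (a, b) (x, y) by apply: H.
elim=> [|n IH] {}x {}y hn exy Wx nWy.
  move/d_eq0: hn => hxa; subst x.
  rewrite (side_neg _ eab) in nWy.
  have := W_dist eba nWy; have := d_edge exy; have := @adj a y b exy.
  rewrite (d_edge eab) => hh hay hyab; have hs := d_sym a y.
  have : d y b = 0 by move: hh hay hyab hs; clear; lia.
  by move/d_eq0 => ->.
rewrite (side_neg _ eab) in nWy.
have dxb := W_dist eab Wx.
have dya := W_dist eba nWy.
have [h1|h1] := @adj x y a exy; have [h2|h2] := @adj x y b exy;
  try by move: dxb dya hn h1 h2; clear; lia.
have [x' exx' dx'a] := d_step hn.
have Wx' : W a b x'.
  by apply: L1 Wx _; rewrite (d_edge exx') hn dx'a; lia.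
have dx'b := W_dist eab Wx'.
have dx'y : d x' y = 2.
  have := d_tri x' x y; have := d_tri y x' a; have := d_sym x x'; have := d_sym y x'.
  rewrite (d_edge exx') (d_edge exy).
  by move: dxb dya hn h1 h2 dx'a; clear; lia.
have [y' [u1 u2 u3]] := med_ex x' y b.
have := d_sym b y'; have := d_sym b x'; have := d_sym y' y; have := d_sym y' x' => r1 r2 r3 r4.
have dx'y' : d x' y' = 1 by slia.
have dyy' : d y y' = 1 by slia.
have Wy' : W b a y' by apply: L1 nWy _; slia.
have ex'y' : e x' y' by apply: d1_edge.
have eyy' : e y y' by apply: d1_edge.
have nWy' : ~~ W a b y' by rewrite (side_neg _ eab).
apply: connect_trans (IH x' y' dx'a ex'y' Wx' nWy') _.
apply: connect1; rewrite /theta_step /is_edge /= exy ex'y' /=.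
apply/orP; right; apply/and4P; split.
- by rewrite esym.
- by rewrite esym.
- by apply/eqP => h; subst y; move: dx'y; rewrite d_xx.
- by apply/eqP => h; subst y'; move: nWy'; rewrite Wx.
Qed.

Section Half.
Variables (a b : T).
Hypothesis eab : e a b.
Local Notation E := (theta_class e a b).

Lemma swap_in x y : (x, y) \in E -> (y, x) \in E.
Proof.
rewrite !inE /is_edge /= => /andP[exy hc].
rewrite esym exy /=; apply: connect_trans hc _; apply: connect1.
by rewrite /theta_step /is_edge /= exy esym exy eqxx.
Qed.

Lemma del_side x y : del_rel e E x y -> W a b x = W a b y.
Proof.
move=> /andP[exy nE].
case hx: (W a b x); case hy: (W a b y) => //.
  have nWy : ~~ W a b y by rewrite hy.
  by move: nE; rewrite inE /is_edge /= exy (cross_class eab exy hx nWy).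
have eyx : e y x by rewrite esym.
have nWx : ~~ W a b x by rewrite hx.
have : (y, x) \in E by rewrite inE /is_edge /= eyx (cross_class eab eyx hy nWx).
by move/swap_in; move: nE => /negP.
Qed.

Lemma conn_side x y : connect (del_rel e E) x y -> W a b x = W a b y.
Proof.
move/connectP => [s pth ->]; elim: s x pth => [|z s IH] x //= /andP[h hp].
by rewrite (del_side h); apply: IH.
Qed.

Lemma reach c c' (ecc : e c c') :
  (forall p q, e p q -> W c c' p -> W c c' q -> (p, q) \notin E) ->
  forall x, W c c' x -> connect (del_rel e E) x c.
Proof.
move=> hE.
suff H : forall n x, d x c = n -> W c c' x -> connect (del_rel e E) x c.
  by move=> x; apply: H.
elim=> [|n IH] x hn Wx.
  by move/d_eq0: hn => ->; apply: connect0.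
have [x' exx' dx'c] := d_step hn.
have Wx' : W c c' x'.
  by apply: L1 Wx _; rewrite (d_edge exx') hn dx'c; lia.
apply: connect_trans (IH x' dx'c Wx'); apply: connect1.
by rewrite /del_rel exx' hE.
Qed.

Lemma del_sym : symmetric (del_rel e E).
Proof.
move=> x y; rewrite /del_rel esym; congr (_ && _).
by apply/idP/idP; apply: contra; apply: swap_in.
Qed.

Lemma conn_iff x y : connect (del_rel e E) x y = (W a b x == W a b y).
Proof.
have eba : e b a by rewrite esym.
apply/idP/eqP; first exact: conn_side.
have hs := sym_connect_sym del_sym.
have hA : forall p q, e p q -> W a b p -> W a b q -> (p, q) \notin E.
  move=> p q _ hp hq; apply/negP => /(class_cross eab); by rewrite /cross /= hp hq.
have hB : forall p q, e p q -> W b a p -> W b a q -> (p, q) \notin E.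
  move=> p q _ hp hq; apply/negP => /(class_cross eab).
  by rewrite /cross /= -(side_neg _ eba) hp -(side_neg _ eba) hq.
case hx: (W a b x) => hy.
  apply: connect_trans (reach eab hA hx) _.
  by rewrite hs; apply: (reach eab hA); rewrite -hy.
have Wx : W b a x by rewrite -(side_neg _ eab) hx.
have Wy : W b a y by rewrite -(side_neg _ eab) -hy.
apply: connect_trans (reach eba hB Wx) _.
by rewrite hs; apply: (reach eba hB).
Qed.

End Half.

End G.

Theorem mainTheorem13 (T : finType) (e : rel T)
  (hG : simple_connected_graph e) (hmed : median_graph e) (hU3 : in_U3 e)
  (hn : 3 <= #|T|)
  (v0 : T) (hv0 : in_all_majority_halfspaces e v0)
  (u v : T) (hu : u != v0) (hv : v != v0)
  (hneq : ladder e v0 u != ladder e v0 v)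
  (hint : ladder e v0 u :&: ladder e v0 v != set0)
  (m : T)
  (hm : m \in interval e u v :&: interval e v v0 :&: interval e v0 u) :
  m != v0 /\ ladder e v0 m = ladder e v0 u :&: ladder e v0 v.
Proof.
case: hG => esym [eirr econ].
move: hm; rewrite !inE => /andP[/andP[/eqP h1 /eqP h2] /eqP h3].
have key : forall E, (E \in ladder e v0 m) =
    (E \in ladder e v0 u) && (E \in ladder e v0 v).
  move=> E; rewrite !inE.
  case hE: (is_theta_class e E) => //=.
  move/existsP: hE => [a /existsP[b /andP[eab /eqP ->]]].
  rewrite !(conn_iff esym eirr econ hmed eab).
  have c1 := @convS T e esym eirr econ hmed a b eab _ v0 u m.
  have c2 := @convS T e esym eirr econ hmed a b eab _ v v0 m.
  have c3 := @convS T e esym eirr econ hmed a b eab _ u v m.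
  have {}c1 := fun hh => c1 _ erefl hh h3.
  have {}c2 := fun hh => c2 _ erefl hh h2.
  have {}c3 := fun hh => c3 _ erefl hh h1.
  have b1 : (W e a b u == W e a b v0) ==> (W e a b m == W e a b v0).
    by apply/implyP => /eqP /c1 ->.
  have b2 : (W e a b v0 == W e a b v) ==> (W e a b m == W e a b v).
    by apply/implyP => /eqP hh; rewrite c2 -?hh.
  have b3 : (W e a b v == W e a b u) ==> (W e a b m == W e a b u).
    by apply/implyP => /eqP /c3 ->.
  move: b1 b2 b3; clear.
  case: (W e a b m); case: (W e a b u); case: (W e a b v); case: (W e a b v0);
    by case: [exists w, _].
split; last by apply/setP => E; rewrite key in_setI.
move/set0Pn: hint => [E]; rewrite in_setI -key inE => /and3P[_ hc _].
by apply/eqP => hmv; rewrite hmv connect0 in hc.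
Qed.
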